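(* Let $z\in I^+$, $X\subseteq N$, and suppose $\varphi(\overline z^X)=(B,Y,M,A,X)$ (in particular $\varphi(\overline z^X)\ne\mathbf 0$). Then for all $C\in X$ and $D\in Y$ the following are equivalent: (i) $C\,\mathcal R_X\,A$ and $B\,\mathcal R_Y\,D$; (ii) there exist sentential forms $u,v$ of $\overline{\mathcal G}$ such that $(C,X)\Rightarrow^*_{\overline{\mathcal G}}u\,(D,Y)[\overline z^X]\,v$.
   Context: Let $\mathcal{G}=(N,T,I,P,S)$ be an indexed grammar: $N$ (non-terminals), $T$ (terminals), $I$ (stack symbols) finite pairwise disjoint alphabets, $S\in N$, and productions of the forms $A\to w$ ($w\in T^*$), $A\to BC$, $A\to Bf$, $Af\to B$ ($A,B,C\in N$, $f\in I$). Terms $A[z]$ ($A\in N$, $z\in I^*$ the stack, top on the left; $A$ means $A[\varepsilon]$); sentential forms are words over terms and terminals; derivation: $uA[z]v\Rightarrow uB[z]C[z]v$ if $A\to BC\in P$; $uA[z]v\Rightarrow uB[fz]v$ if $A\to Bf\in P$; $uA[fz]v\Rightarrow uB[z]v$ if $Af\to B\in P$; $uA[z]v\Rightarrow uwv$ if $A\to w\in P$, $w\in T^*$; $\Rightarrow^*$ is the reflexive transitive closure. For $X\subseteq N$, $z\in I^*$: $z\cdot X=\{A\in N:\exists u\in(X\cup T)^*, A[z]\Rightarrow^*u\}$ (non-terminals in $u$ with empty stack); $\mathrm{Useful}=\{A:\exists w\in T^*, A\Rightarrow^*w\}$; assume $S\in\mathrm{Useful}$. The annotated version $\overline{\mathcal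 G}$ has non-terminals $\overline N=\{(A,X)\in N\times2^N:A\in X\}$, stack symbols $\overline I=I\times 2^N$, start $(S,\mathrm{Useful})$, and productions: $(A,X)\to w$ for $A\to w\in P$, $A\in X$; $(A,X)\to(B,X)(C,X)$ for $A\to BC\in P$, $A,B,C\in X$; $(A,X)\to(B,Y)(f,X)$ for $A\to Bf\in P$ with $Y=f\cdot X$, $A\in X$, $B\in Y$; $(A,Y)(f,X)\to(B,X)$ for $Af\to B\in P$ with $Y=f\cdot X$, $A\in Y$, $B\in X$. For $z=f_n\cdots f_1\in I^*$, $\overline z^X=(f_n,X_n)\cdots(f_1,X_1)$ with $X_1=X$, $X_{i+1}=f_i\cdot X_i$. Assume every $f\in I$ occurs in some production $A\to Bf$ and there are functions $\alpha,\beta:I\to N$ such that every production $A\to Bf$ in $P$ satisfies $A=\alpha(f)$, $B=\beta(f)$. For $X\subseteq N$, $A\,\mathcal R_X\,B$ holds iff $A,B\in X$ and $(A,X)\Rightarrow^*_{\overline{\mathcal G}}u\,(B,X)\,v$ for some sentential forms $u,v$ of $\overline{\mathcal G}$ (with $(B,X)$ having empty stack). The stack monoid $\mathbb M$ has elements: all tuples $(B,Y,M,A,X)$ with $A,B\in N$, $X,Y\subseteq N$, $M\in\mathbb B^{N\times N}$ (Boolean matrices, product over $(\vee,\wedge)$), plus a neutral element $\mathbf 1$ and an absorbing element $\mathbf 0$; product $(B_2,Y_2,M_2,A_2,X_2)\cdot(B_1,Y_1,M_1,A_1,X_1)=(B_2,Y_2,M_1M_2,A_1,X_1)$ if $X_2=Y_1$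 and $B_1\,\mathcal R_{X_2}\,A_2$, and $\mathbf 0$ otherwise. $\varphi:\overline I^*\to\mathbb M$ is the monoid morphism with $\varphi(f,X)=(\beta(f),f\cdot X,M_{f,X},\alpha(f),X)$, where $M_{f,X}(A,B)=\top$ iff $A[f]\Rightarrow^*_{\mathcal G}uBv$ for some $u,v\in(X\cup T)^*$. *)

(* Defs.v *)
From Stdlib Require Import Relations.
From mathcomp Require Import all_boot.
From mathcomp Require Import boolp.

Set Implicit Arguments.
Unset Strict Implicit.
Unset Printing Implicit Defensive.

(* A term A[z] (stack z, top on the left) or a terminal. *)
Inductive sym (N I T : Type) :=
| Tm of T
| Nt of N & seq I.
Arguments Tm {N I T}.
Arguments Nt {N I T}.

Record rules (N I T : Type) := Rules {
  r_term : N -> seq T -> Prop;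
  r_bin  : N -> N -> N -> Prop;
  r_push : N -> N -> I -> Prop;       (* A -> B f *)
  r_pop  : N -> I -> N -> Prop        (* A f -> B *)
}.

Inductive step (N I T : Type) (P : rules N I T) :
    seq (sym N I T) -> seq (sym N I T) -> Prop :=
| step_bin u v A B C z : r_bin P A B C ->
    step P (u ++ Nt A z :: v) (u ++ Nt B z :: Nt C z :: v)
| step_push u v A B f z : r_push P A B f ->
    step P (u ++ Nt A z :: v) (u ++ Nt B (f :: z) :: v)
| step_pop u v A B f z : r_pop P A f B ->
    step P (u ++ Nt A (f :: z) :: v) (u ++ Nt B z :: v)
| step_term u v A w z : r_term P A w ->
    step P (u ++ Nt A z :: v) (u ++ map Tm w ++ v).

Definition derives (N I T : Type) (P : rules N I T) := clos_refl_trans _ (step P).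

Record igrammar (N I T : finType) := IGrammar {
  start : N;
  pterm : seq (N * seq T);            (* finitely many A -> w *)
  pbin  : N -> N -> N -> bool;
  ppush : N -> N -> I -> bool;
  ppop  : N -> I -> N -> bool
}.

Section Grammar.
Variables (N I T : finType) (G : igrammar N I T).

Definition rules_of : rules N I T :=
  Rules (fun A w => (A, w) \in pterm G) (fun A B C => pbin G A B C)
        (fun A B f => ppush G A B f) (fun A f B => ppop G A f B).

Definition in_XT (X : {set N}) (u : seq (sym N I T)) : bool :=
  all (fun s => match s with Tm _ => true | Nt B z => (z == [::]) && (B \in X) end) u.

Definition dot (z : seq I) (X : {set N}) : {set N} :=
  [set A | `[< exists u, derives rules_of [:: Nt A z] u /\ in_XT X u >]].

Definition Useful : {set N} :=
  [set A | `[< exists w : seq T, derives rules_of [:: Nt A [::]] (map Tm w) >]].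

Definition Nbar := {p : N * {set N} | p.1 \in p.2}.
Definition Ibar := (I * {set N})%type.

Definition rules_bar : rules Nbar Ibar T :=
  Rules
    (fun a w => ((val a).1, w) \in pterm G)
    (fun a b c => pbin G (val a).1 (val b).1 (val c).1
                  /\ (val b).2 = (val a).2 /\ (val c).2 = (val a).2)
    (fun a b fX => ppush G (val a).1 (val b).1 fX.1
                  /\ fX.2 = (val a).2 /\ (val b).2 = dot [:: fX.1] (val a).2)
    (fun a fX b => ppop G (val a).1 fX.1 (val b).1
                  /\ (val a).2 = dot [:: fX.1] fX.2 /\ (val b).2 = fX.2).

Definition start_bar (HS : start G \in Useful) : Nbar :=
  exist _ (start G, Useful) HS.

(* annotation of z = f_n ... f_1 (top on the left):
   (f_n,X_n) ... (f_1,X_1), X_1 = X, X_{i+1} = f_i . X_i *)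
Fixpoint annot_up (r : seq I) (X : {set N}) : seq Ibar :=
  match r with
  | [::] => [::]
  | f :: r' => (f, X) :: annot_up r' (dot [:: f] X)
  end.
Definition bar (z : seq I) (X : {set N}) : seq Ibar := rev (annot_up (rev z) X).

Definition RX (X : {set N}) (A B : N) : Prop :=
  exists (HA : A \in X) (HB : B \in X), exists u v,
    derives rules_bar [:: Nt (exist _ (A, X) HA : Nbar) [::]]
                      (u ++ Nt (exist _ (B, X) HB : Nbar) [::] :: v).

Definition bmat := {ffun N * N -> bool}.
Definition bmul (M1 M2 : bmat) : bmat :=
  [ffun p => [exists C, M1 (p.1, C) && M2 (C, p.2)]].

Inductive mon :=
| Mone
| Mzero
| Mel of N & {set N} & bmat & N & {set N}.   (* (B, Y, M, A, X) *)

Definition mmul (x y : mon) : mon :=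
  match x, y with
  | Mone, _ => y
  | _, Mone => x
  | Mzero, _ => Mzero
  | _, Mzero => Mzero
  | Mel B2 Y2 M2 A2 X2, Mel B1 Y1 M1 A1 X1 =>
      if (X2 == Y1) && `[< RX X2 B1 A2 >] then Mel B2 Y2 (bmul M1 M2) A1 X1
      else Mzero
  end.

Definition Mf (f : I) (X : {set N}) : bmat :=
  [ffun p => `[< exists u v, derives rules_of [:: Nt p.1 [:: f]]
                    (u ++ Nt p.2 [::] :: v) /\ in_XT X u /\ in_XT X v >]].

Definition phi1 (alpha beta : I -> N) (fX : Ibar) : mon :=
  Mel (beta fX.1) (dot [:: fX.1] fX.2) (Mf fX.1 fX.2) (alpha fX.1) fX.2.

Definition phi (alpha beta : I -> N) (w : seq Ibar) : mon :=
  foldr mmul Mone (map (phi1 alpha beta) w).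

End Grammar.

(* Main.v *)
Require Import Defs.
From mathcomp Require Import all_boot.
From mathcomp Require Import boolp.
From Stdlib Require Import Relations Classical.
From Stdlib Require List.
From mathcomp Require Import zify.

Set Implicit Arguments.
Unset Strict Implicit.
Unset Printing Implicit Defensive.

Section Spine.
Variables (N I T : Type) (P : rules N I T).

Inductive sp : N * seq I -> N * seq I -> Prop :=
| sp_binl A B C z : r_bin P A B C -> sp (A, z) (B, z)
| sp_binr A B C z : r_bin P A B C -> sp (A, z) (C, z)
| sp_push A B f z : r_push P A B f -> sp (A, z) (B, f :: z)
| sp_pop A f B z : r_pop P A f B -> sp (A, f :: z) (B, z).

Definition sps := clos_refl_trans _ sp.

Lemma cat_cancel (t t' s : seq I) : t ++ s = t' ++ s -> t = t'.
Proof.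
move=> E.
have Hs : size t = size t'.
  by have := congr1 size E; rewrite !size_cat => /eqP; rewrite eqn_add2r => /eqP.
by rewrite -(take_size_cat s (erefl (size t))) E take_size_cat.
Qed.

Lemma derives_ctx x y w w' : derives P w w' -> derives P (x ++ w ++ y) (x ++ w' ++ y).
Proof.
elim=> [a b H| a| a b c _ H1 _ H2].
- apply: rt_step; case: H => [u v A B C z H|u v A B f z H|u v A B f z H|u v A w0 z H].
  + have -> : forall a, x ++ (u ++ a :: v) ++ y = (x ++ u) ++ a :: (v ++ y)
      by move=> a0; rewrite -!catA.
    have -> : x ++ (u ++ Nt B z :: Nt C z :: v) ++ y = (x ++ u) ++ Nt B z :: Nt C z :: (v ++ y)
      by rewrite -!catA.
    exact: step_bin.
  + have E : forall a, x ++ (u ++ a :: v) ++ y = (x ++ u) ++ a :: (v ++ y)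
      by move=> a0; rewrite -!catA.
    rewrite !E; exact: step_push.
  + have E : forall a, x ++ (u ++ a :: v) ++ y = (x ++ u) ++ a :: (v ++ y)
      by move=> a0; rewrite -!catA.
    rewrite !E; exact: step_pop.
  + have -> : forall a, x ++ (u ++ a :: v) ++ y = (x ++ u) ++ a :: (v ++ y)
      by move=> a0; rewrite -!catA.
    have -> : x ++ (u ++ map Tm w0 ++ v) ++ y = (x ++ u) ++ map Tm w0 ++ (v ++ y)
      by rewrite -!catA.
    exact: step_term.
- exact: rt_refl.
- exact: rt_trans H1 H2.
Qed.

Lemma L2 p q : sps p q -> exists u v, derives P [:: Nt p.1 p.2] (u ++ Nt q.1 q.2 :: v).
Proof.
elim=> [a b H| a| a b c _ [u1 [v1 H1]] _ [u2 [v2 H2]]].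
- case: H => [A B C z H|A B C z H|A B f z H|A f B z H] /=.
  + exists [::], [:: Nt C z]; apply: rt_step; exact: (step_bin [::] [::] z H).
  + exists [:: Nt B z], [::]; apply: rt_step; exact: (step_bin [::] [::] z H).
  + exists [::], [::]; apply: rt_step; exact: (step_push [::] [::] z H).
  + exists [::], [::]; apply: rt_step; exact: (step_pop [::] [::] z H).
- by exists [::], [::]; apply: rt_refl.
- exists (u1 ++ u2), (v2 ++ v1); apply: rt_trans H1 _.
  have H := derives_ctx u1 v1 H2.
  have -> : (u1 ++ u2) ++ Nt c.1 c.2 :: v2 ++ v1 = u1 ++ (u2 ++ Nt c.1 c.2 :: v2) ++ v1
    by rewrite -!catA.
  exact: H.
Qed.

Lemma L1 w w' : derives P w w' -> forall b t, List.In (Nt b t) w' ->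
  exists b0 t0, List.In (Nt b0 t0) w /\ sps (b0, t0) (b, t).
Proof.
elim=> [a c H| a| a c d _ H1 _ H2].
- case: H => [u v A B C z H|u v A B f z H|u v A B f z H|u v A w0 z H] b t;
    rewrite !List.in_app_iff /=.
  + case=> [Hu|[E|[E|Hv]]].
    * exists b, t; split; [rewrite List.in_app_iff; tauto | exact: rt_refl].
    * case: E => <- <-; exists A, z; split; [rewrite List.in_app_iff /=; tauto|].
      apply: rt_step; exact: sp_binl H.
    * case: E => <- <-; exists A, z; split; [rewrite List.in_app_iff /=; tauto|].
      apply: rt_step; exact: sp_binr H.
    * exists b, t; split; [rewrite List.in_app_iff /=; tauto | exact: rt_refl].
  + case=> [Hu|[E|Hv]].
    * exists b, t; split; [rewrite List.in_app_iff; tauto | exact: rt_refl].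
    * case: E => <- <-; exists A, z; split; [rewrite List.in_app_iff /=; tauto|].
      apply: rt_step; exact: sp_push H.
    * exists b, t; split; [rewrite List.in_app_iff /=; tauto | exact: rt_refl].
  + case=> [Hu|[E|Hv]].
    * exists b, t; split; [rewrite List.in_app_iff; tauto | exact: rt_refl].
    * case: E => <- <-; exists A, (f :: z); split; [rewrite List.in_app_iff /=; tauto|].
      apply: rt_step; exact: sp_pop H.
    * exists b, t; split; [rewrite List.in_app_iff /=; tauto | exact: rt_refl].
  + case=> [Hu|[Hw|Hv]].
    * exists b, t; split; [rewrite List.in_app_iff; tauto | exact: rt_refl].
    * by case/List.in_map_iff: Hw => x [].
    * exists b, t; split; [rewrite List.in_app_iff /=; tauto | exact: rt_refl].
- move=> b t Hin; exists b, t; split=> //; exact: rt_refl.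
- move=> b t /H2 [b1 [t1 [/H1 [b0 [t0 [Hin S1]]] S2]]].
  exists b0, t0; split=> //; exact: rt_trans S1 S2.
Qed.

Lemma lift1 a b t t' s : sp (a, t) (b, t') -> sp (a, t ++ s) (b, t' ++ s).
Proof.
move E1: (a, t) => p; move E2: (b, t') => q H.
case: H E1 E2 => [A B C z H|A B C z H|A B f z H|A f B z H] [-> ->] [-> ->].
- exact: sp_binl H.
- exact: sp_binr H.
- exact: sp_push H.
- exact: sp_pop H.
Qed.

Lemma lift p q s : sps p q -> sps (p.1, p.2 ++ s) (q.1, q.2 ++ s).
Proof.
elim=> [[a t] [b t'] H| a| a b c _ H1 _ H2].
- apply: rt_step; exact: lift1.
- exact: rt_refl.
- exact: rt_trans H1 H2.
Qed.

Definition spS (s : seq I) (p q : N * seq I) := sp (p.1, p.2 ++ s) (q.1, q.2 ++ s).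

Lemma strip1 s p q : spS s p q -> sp p q.
Proof.
case: p q => [a t] [b t']; rewrite /spS /=.
move E1: (a, t ++ s) => p; move E2: (b, t' ++ s) => q H.
case: H E1 E2 => [A B C z H|A B C z H|A B f z H|A f B z H] [-> E1] [-> E2].
- have -> : t' = t by apply: (@cat_cancel _ _ s); rewrite /= E1 E2.
  exact: sp_binl H.
- have -> : t' = t by apply: (@cat_cancel _ _ s); rewrite /= E1 E2.
  exact: sp_binr H.
- have -> : t' = f :: t by apply: (@cat_cancel _ _ s); rewrite /= E1 E2.
  exact: sp_push H.
- have -> : t = f :: t' by apply: (@cat_cancel _ _ s); rewrite /= E1 E2.
  exact: sp_pop H.
Qed.

Lemma strip s p q : clos_refl_trans _ (spS s) p q -> sps p q.
Proof.
elim=> [a b H| a| a b c _ H1 _ H2].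
- apply: rt_step; exact: strip1 H.
- exact: rt_refl.
- exact: rt_trans H1 H2.
Qed.

Lemma push_inv a b f u : sp (a, u) (b, f :: u) -> r_push P a b f.
Proof.
move E1: (a, u) => p; move E2: (b, f :: u) => q H.
case: H E1 E2 => [A B C z H|A B C z H|A B g z H|A g B z H] [E3 E4] [E5 E6].
- by move: (congr1 size E6) (congr1 size E4) => /=; lia.
- by move: (congr1 size E6) (congr1 size E4) => /=; lia.
- by case: E6 => -> _; subst.
- by move: (congr1 size E6) (congr1 size E4) => /=; lia.
Qed.

Lemma last_split x y : sps x y -> forall s t, y.2 = t ++ s ->
 (exists t0, x.2 = t0 ++ s /\ clos_refl_trans _ (spS s) (x.1, t0) (y.1, t)) \/
 (exists c u f c', sps x (c, u) /\ s = f :: u /\ sp (c, u) (c', f :: u) /\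
    clos_refl_trans _ (spS s) (c', [::]) (y.1, t)).
Proof.
move=> H0; have := @clos_rt_rtn1 _ _ _ _ H0; clear H0; elim=> [|y0 y1 Hst Hrt IH] s t E.
- left; exists t; split=> //; exact: rt_refl.
- have Hrt' := @clos_rtn1_rt _ _ _ _ Hrt.
  case: y0 Hst Hrt Hrt' IH => c w Hst Hrt Hrt' IH.
  case: y1 Hst E => b w' Hst /= E; subst w'.
  case: (classic (exists t0, w = t0 ++ s)) => [[t0 Ew]|Hn].
  + subst w; case: (IH s t0 erefl) => [[t1 [E1 H1]]|[c0 [u [f [c' [H1 [H2 [H3 H4]]]]]]]].
    * left; exists t1; split=> //; apply: rt_trans H1 _; apply: rt_step; exact: Hst.
    * right; exists c0, u, f, c'; do 3 split=> //.
      apply: rt_trans H4 _; apply: rt_step; exact: Hst.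
  + move E1: (c, w) Hst => p; move E2: (b, t ++ s) => q Hst.
    case: Hst E1 E2 => [A B C z H|A B C z H|A B g z H|A g B z H] [E3 E4] [E5 E6].
    * by case: Hn; exists t; rewrite E4 E6.
    * by case: Hn; exists t; rewrite E4 E6.
    * case: t E6 => [|g' t'] /= E6.
      -- right; exists c, w, g, b; subst; do 3 split=> //.
         ++ exact: sp_push H.
         ++ exact: rt_refl.
      -- by case: Hn; exists t'; case: E6 => _ E; rewrite E4 E.
    * by case: Hn; exists (g :: t); rewrite E4 -E6.
Qed.

End Spine.

Section Gram.
Variables (N I T : finType) (G : igrammar N I T) (alpha beta : I -> N).

Lemma phi_ne1 e w : phi G alpha beta (e :: w) <> @Mone N.
Proof.
rewrite /phi /=; case: (foldr _ _ _) => //= *; by case: ifP.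
Qed.

Lemma HeadLast w : forall e B Y M A X', phi G alpha beta (e :: w) = Mel B Y M A X' ->
  B = beta e.1 /\ Y = dot G [:: e.1] e.2 /\ A = alpha (last e w).1 /\ X' = (last e w).2.
Proof.
elim: w => [|e' w IH] e B Y M A X'.
- by rewrite /phi /= /phi1; case=> <- <- _ <- <-.
- have -> : phi G alpha beta [:: e, e' & w] = mmul G (phi1 G alpha beta e) (phi G alpha beta (e' :: w)) by [].
  case E: (phi G alpha beta (e' :: w)) => [||B1 Y1 M1 A1 X1] //.
  + by have := phi_ne1 E.
  + rewrite /= /phi1; case: ifP => // _ [<- <- _ <- <-].
    by have [_ [_ [-> ->]]] := IH _ _ _ _ _ _ E.
Qed.

Lemma RX_sps X0 A0 B0 : RX G X0 A0 B0 -> exists HA HB,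
  sps (rules_bar G) (exist _ (A0, X0) HA : Nbar N, [::]) (exist _ (B0, X0) HB : Nbar N, [::]).
Proof.
case=> HA [HB [u [v Hd]]]; exists HA, HB.
have Hin : List.In (Nt (exist _ (B0, X0) HB : Nbar N) [::]) (u ++ Nt (exist _ (B0, X0) HB : Nbar N) [::] :: v).
  by rewrite List.in_app_iff /=; tauto.
have [b0 [t0 [H1 H2]]] := L1 Hd Hin.
by case: H1 => // [[E1 E2]]; subst.
Qed.

Hypothesis Hocc : forall f : I, exists A B : N, ppush G A B f.
Hypothesis Hab : forall (A B : N) (f : I), ppush G A B f -> A = alpha f /\ B = beta f.

Lemma Hpush f : ppush G (alpha f) (beta f) f.
Proof. by case: (Hocc f) => A [B H]; case: (Hab H) => E1 E2; rewrite -E1 -E2. Qed.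

Lemma Up w : forall e (B : N) (Y : {set N}) (M : bmat N) (A : N) (X' : {set N}) (HA : A \in X') (HB : B \in Y),
  phi G alpha beta (e :: w) = Mel B Y M A X' ->
  sps (rules_bar G) (exist _ (A, X') HA : Nbar N, [::]) (exist _ (B, Y) HB : Nbar N, e :: w).
Proof.
elim: w => [|e' w IH] e B Y M A X' HA HB.
- rewrite /phi /= /phi1; case=> EB EY _ EA EX; subst.
  apply: rt_step; apply: sp_push => /=; split=> //; exact: Hpush.
- have -> : phi G alpha beta [:: e, e' & w] = mmul G (phi1 G alpha beta e) (phi G alpha beta (e' :: w)) by [].
  case E: (phi G alpha beta (e' :: w)) => [||B1 Y1 M1 A1 X1] //.
  + by have := phi_ne1 E.
  + rewrite /= /phi1; case: ifP => // /andP [/eqP EX /asboolP HR] [EB EY _ EA EX']; subst.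
    have [HB1 [Ha Hs]] := RX_sps HR.
    have S1 := IH _ _ _ _ _ _ HA HB1 E.
    apply: rt_trans S1 _; apply: rt_trans (lift (e' :: w) Hs) _ => /=.
    apply: rt_step; apply: sp_push => /=; split=> //; exact: Hpush.
Qed.

End Gram.

Theorem lemma5p2 (N I T : finType) (G : igrammar N I T) (alpha beta : I -> N)
  (HS : start G \in Useful G)
  (Hocc : forall f : I, exists A B : N, ppush G A B f)
  (Hab : forall (A B : N) (f : I), ppush G A B f -> A = alpha f /\ B = beta f)
  (z : seq I) (X Y : {set N}) (B A : N) (M : bmat N)
  (Hz : z != [::])
  (Hphi : phi G alpha beta (bar G z X) = Mel B Y M A X)
  (C D : N) (HC : C \in X) (HD : D \in Y) :
  (RX G X C A /\ RX G Y B D) <->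
  (exists u v : seq (sym (Nbar N) (Ibar N I) T),
     derives (rules_bar G) [:: Nt (exist _ (C, X) HC : Nbar N) [::]]
             (u ++ Nt (exist _ (D, Y) HD : Nbar N) (bar G z X) :: v)).
Proof.
have Hsz : forall r X0, size (annot_up G r X0) = size r.
  by elim=> [|f r IH] X0 //=; rewrite IH.
have Hne : bar G z X <> [::].
  move=> E; have := congr1 size E; rewrite /bar size_rev Hsz size_rev /=.
  by move/eqP; rewrite size_eq0 (negbTE Hz).
split.
- case=> [/RX_sps [HC' [HA S1]] /RX_sps [HB [HD' S2]]].
  rewrite (bool_irrelevance HC' HC) in S1; rewrite (bool_irrelevance HD' HD) in S2.
  case Eb: (bar G z X) Hphi Hne => [|e w] Hphi' Hne' //.
  have S3 := Up Hocc Hab HA HB Hphi'.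
  have S4 := lift (e :: w) S2.
  have [u [v Hd]] := L2 (rt_trans _ _ _ _ _ (rt_trans _ _ _ _ _ S1 S3) S4).
  by exists u, v.
- case=> u [v Hd].
  have Hin : List.In (Nt (exist _ (D, Y) HD : Nbar N) (bar G z X))
                (u ++ Nt (exist _ (D, Y) HD : Nbar N) (bar G z X) :: v).
    by rewrite List.in_app_iff /=; tauto.
  have [b0 [t0 [H1 S]]] := L1 Hd Hin.
  case: H1 => // [[Eb0 Et0]]; subst b0 t0.
  case Eb: (bar G z X) S Hphi Hne => [|e w] S Hphi' Hne' //.
  have [EB [EY [EA EX]]] := HeadLast Hphi'.
  split.
  + have [w0 [el Ew]] : exists w0 el, e :: w = rcons w0 el.
      by exists (belast e w), (last e w); rewrite lastI.
    rewrite Ew in S.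
    case: (@last_split _ _ _ _ _ _ S [:: el] w0 (esym (cats1 w0 el))).
    * case=> t0 [/= E0 _]; by have := congr1 size E0; rewrite size_cat /= addn1.
    * case=> c [u0 [f [c' [S1 [Ef [Hs _]]]]]].
      case: Ef => Ef Eu; subst f u0.
      have [Hp [E2 _]] := push_inv Hs.
      have El : last e w = el by rewrite -(last_cons e) Ew last_rcons.
      case: (Hab _ _ _ Hp) => Ec _.
      clear Hs; case: c S1 Hp Ec E2 => [[a x] Hax] S1 Hp /= Ec E2.
      have Eax : (a, x) = (A, X) by rewrite Ec -E2 EA EX El.
      move: Hax S1 {Hp}; rewrite Eax => Hax S1.
      exists HC, Hax.
      by have [u1 [v1 Hd1]] := L2 S1; exists u1, v1.
  + case: (@last_split _ _ _ _ _ _ S (e :: w) [::] erefl).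
    * case=> t0 [/= E0 _]; by have := congr1 size E0; rewrite size_cat /= addnS.
    * case=> c [u0 [f [c' [S1 [Ef [Hs S2]]]]]].
      case: Ef => Ef Eu; subst f u0.
      have [Hp [E1 E2]] := push_inv Hs.
      case: (Hab _ _ _ Hp) => _ Ec'.
      have S3 := strip S2.
      case: c' Hs Hp Ec' E2 S2 S3 => [[b y] Hby] Hs Hp /= Ec' E2 S2 S3.
      have Eby : (b, y) = (B, Y) by rewrite Ec' E2 EB EY E1.
      move: Hby S3 {Hp S2 Hs}; rewrite Eby => Hby S3.
      exists Hby, HD.
      have [u1 [v1 Hd1]] := L2 S3; exists u1, v1; exact Hd1.
Qed.
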